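(* Fix $t>1$ and let $(g_{n,t})_{n\ge0}$ be defined by $g_{0,t}=1$, $g_{n,t}=n\,g_{n-1,t}^{\,t}$ $(n\ge1)$. Let $\sigma_t=\prod_{n=1}^\infty n^{1/t^n}$. For $x\in[0,\infty)$ define $f_t(x)=\prod_{m=1}^{\infty}(1+mx)^{1/t^m}\in[1,\infty)$. Then for each $N\ge2$ and $n\ge1$ there exists a positive number $\mu=\mu(N,n,t)$ such that $$g_{n,t}=\sigma_t^{\,t^n}n^{-1/(t-1)}\left[1+\sum_{k=1}^{N-1}\frac{1}{n^k k!}\frac{\partial^k f_t}{\partial x^k}(0)+\frac{1}{n^N N!}\frac{\partial^N f_t}{\partial x^N}(\mu)\right]^{-1}.$$ Moreover, for fixed $N\ge2$ and fixed $t>1$, $$\lim_{n\to\infty}\mu(N,n,t)=0,\qquad \lim_{n\to\infty}\frac{\partial^N f_t}{\partial x^N}(\mu(N,n,t))=\frac{\partial^N f_t}{\partial x^N}(0).$$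
   Context: Derivatives of $f_t$ at $x=0$ are right-sided derivatives. *)

(* Defs.v *)
From Stdlib Require Import Reals Lra.
From Coquelicot Require Import Coquelicot.
Open Scope R_scope.

Fixpoint g_seq (t : R) (n : nat) : R :=
  match n with
  | O => 1
  | S k => INR (S k) * Rpower (g_seq t k) t
  end.

Fixpoint prod1 (a : nat -> R) (M : nat) : R :=
  match M with
  | O => 1
  | S k => prod1 a k * a (S k)
  end.

Definition inf_prod (a : nat -> R) : R := real (Lim_seq (fun M => prod1 a M)).

Definition sigma_t (t : R) : R :=
  inf_prod (fun n => Rpower (INR n) (/ t ^ n)).

Definition f_t (t : R) (x : R) : R :=
  inf_prod (fun m => Rpower (1 + INR m * x) (/ t ^ m)).

(* derivative of a function on [0,oo): ordinary derivative at x > 0,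
   right-sided derivative at x = 0 (values at x < 0 are irrelevant) *)
Definition rderive (g : R -> R) (x : R) : R :=
  if Rlt_dec 0 x then Derive g x
  else lim (filtermap (fun h => (g h - g 0) / h) (at_right 0)).

Fixpoint rderive_n (k : nat) (g : R -> R) : R -> R :=
  match k with
  | O => g
  | S j => rderive (rderive_n j g)
  end.

(* Main.v *)
Require Import Defs.
From Stdlib Require Import Reals Factorial Lra Lia.
From Coquelicot Require Import Coquelicot.
Open Scope R_scope.

Lemma lim_filtermap_right (q : R -> R) (l : R) :
  filterlim q (at_right 0) (locally l) ->
  lim (filtermap q (at_right 0)) = l.
Proof.
  intros Hq.
  assert (PF : ProperFilter (filtermap q (at_right 0))).
  { apply filtermap_proper_filter, at_right_proper_filter. }
  assert (Hc : cauchy (filtermap q (at_right 0))).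
  { intros eps. exists l. apply Hq. apply locally_ball. }
  assert (H2 : filterlim q (at_right 0) (locally (lim (filtermap q (at_right 0))))).
  { intros P [eps HP]. generalize (complete_cauchy _ PF Hc eps). 
    apply filter_imp. intros x Hx. apply HP. exact Hx. }
  apply (filterlim_locally_unique (F := at_right 0) q); auto.
Qed.

Lemma Rolle_open (phi dphi : R -> R) (a b : R) :
  a < b -> filterlim phi (at_right a) (locally (phi a)) ->
  (forall x, a < x <= b -> continuous phi x) ->
  (forall x, a < x < b -> is_derive phi x (dphi x)) ->
  phi a = phi b -> exists c, a < c < b /\ dphi c = 0.
Proof.
  intros Hab Hr Hc Hd Heq.
  set (psi := fun y => phi (Rmax a y)).
  assert (Eloc : forall x, a < x -> locally x (fun y => phi y = psi y)).
  { intros x Hx. exists (mkposreal (x - a) ltac:(lra)). intros y Hy.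
    unfold psi. rewrite Rmax_right; auto.
    unfold ball in Hy; simpl in Hy; unfold AbsRing_ball, abs, minus, plus, opp in Hy; simpl in Hy.
    apply Rabs_lt_between in Hy. lra. }
  assert (Dpsi : forall x, a < x < b -> is_derive psi x (dphi x)).
  { intros x Hx. apply is_derive_ext_loc with phi. apply Eloc; lra. apply Hd; auto. }
  assert (pr : forall x, a < x < b -> derivable_pt psi x).
  { intros x Hx. apply ex_derive_Reals_0. eexists. apply Dpsi; auto. }
  assert (Cpsi : forall x, a <= x <= b -> continuity_pt psi x).
  { intros x Hx. apply continuity_pt_filterlim. destruct (Req_dec x a) as [->|Hxa].
    - intros P [eps HP]. destruct (Hr (ball (phi a) eps) (locally_ball _ _)) as [d Hd'].
      exists d. intros y Hy. apply HP. unfold psi. destruct (Rlt_dec a y) as [Hay|Hay].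
      + rewrite (Rmax_right a y) by lra. rewrite (Rmax_left a a) by lra. apply Hd'; auto.
      + rewrite (Rmax_left a y) by lra. rewrite (Rmax_left a a) by lra. apply ball_center.
    - apply continuous_ext_loc with phi. apply Eloc; lra. apply Hc; lra. }
  destruct (Rolle psi a b pr Cpsi Hab) as [c [P Hc0]].
  { unfold psi. rewrite Rmax_left, Rmax_right; lra. }
  exists c. split; auto. rewrite Derive_Reals in Hc0.
  rewrite (is_derive_unique _ _ _ (Dpsi c P)) in Hc0. exact Hc0.
Qed.

Lemma flim_plus {T} (F : (T -> Prop) -> Prop) {FF : Filter F} (f g : T -> R) (a b : R) :
  filterlim f F (locally a) -> filterlim g F (locally b) ->
  filterlim (fun x => f x + g x) F (locally (a + b)).
Proof.
  intros Hf Hg. apply (filterlim_comp_2 f g Rplus Hf Hg). apply (filterlim_plus a b).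
Qed.

Lemma flim_mult {T} (F : (T -> Prop) -> Prop) {FF : Filter F} (f g : T -> R) (a b : R) :
  filterlim f F (locally a) -> filterlim g F (locally b) ->
  filterlim (fun x => f x * g x) F (locally (a * b)).
Proof.
  intros Hf Hg. apply (filterlim_comp_2 f g Rmult Hf Hg). apply (filterlim_mult a b).
Qed.

Lemma flim_id_right (a : R) : filterlim (fun x => x) (at_right a) (locally a).
Proof. intros P [e HP]. exists e. intros y Hy _. apply HP; auto. Qed.

Lemma flim_right_of_cont (f : R -> R) (a : R) :
  continuous f a -> filterlim f (at_right a) (locally (f a)).
Proof. intros H P HP. destruct (H P HP) as [e He]. exists e. intros y Hy _. apply He; auto. Qed.

Lemma ball_R (x y e : R) : ball x e y <-> Rabs (y - x) < e.
Proof. unfold ball; simpl; unfold AbsRing_ball, abs, minus, plus, opp; simpl. tauto. Qed.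

Lemma MVT_open (g dg : R -> R) (a b : R) :
  a < b -> filterlim g (at_right a) (locally (g a)) ->
  (forall x, a < x <= b -> continuous g x) ->
  (forall x, a < x < b -> is_derive g x (dg x)) ->
  exists c, a < c < b /\ g b - g a = dg c * (b - a).
Proof.
  intros Hab Hr Hc Hd.
  set (K := (g b - g a) / (b - a)).
  destruct (Rolle_open (fun y => g y + (- K) * (y - a)) (fun y => dg y - K) a b Hab) as [c [Hc1 Hc2]].
  - replace (g a + - K * (a - a)) with (g a + (- K) * (a - a)) by ring.
    apply (flim_plus _ g (fun y => - K * (y - a))); auto.
    apply (flim_mult _ (fun _ => - K) (fun y => y - a)). apply filterlim_const.
    apply (flim_plus _ (fun y => y) (fun _ => - a)). apply flim_id_right. apply filterlim_const.
  - intros x Hx. apply (flim_plus _ g (fun y => - K * (y - a))). apply Hc; auto.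
    apply (ex_derive_continuous (fun y => - K * (y - a))). auto_derive; auto.
  - intros x Hx. specialize (Hd x Hx).
    replace (dg x - K) with (dg x + (- K) * (1 - 0)) by ring.
    apply (is_derive_plus g (fun y => - K * (y - a))); auto.
    auto_derive; auto. ring.
  - unfold K. field. lra.
  - exists c. split; auto. apply Rminus_diag_uniq in Hc2. rewrite Hc2.
    unfold K. field. lra.
Qed.

Lemma right_deriv (g psi : R -> R) (l : R) :
  filterlim g (at_right 0) (locally (g 0)) ->
  (forall x, 0 < x -> is_derive g x (psi x)) ->
  filterlim psi (at_right 0) (locally l) ->
  filterlim (fun h => (g h - g 0) / h) (at_right 0) (locally l).
Proof.
  intros Hg Hd Hp P [eps HP].
  destruct (Hp (ball l eps) (locally_ball _ _)) as [d Hd'].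
  exists d. intros h Hh hpos. apply HP.
  destruct (MVT_open g psi 0 h hpos Hg) as [c [Hc1 Hc2]].
  - intros x Hx. apply (ex_derive_continuous (K := R_AbsRing) g). eexists; apply Hd; lra.
  - intros x Hx. apply Hd; lra.
  - rewrite Hc2. replace (psi c * (h - 0) / h) with (psi c) by (field; lra).
    apply Hd'; [|lra]. assert (Hh' : Rabs (h - 0) < d) by apply Hh.
    change (Rabs (c - 0) < d). rewrite Rminus_0_r in *.
    rewrite Rabs_right in * by lra. lra.
Qed.

Lemma isd_mult (f g : R -> R) (x df dg : R) :
  is_derive f x df -> is_derive g x dg ->
  is_derive (fun y => f y * g y) x (df * g x + f x * dg).
Proof. intros Hf Hg. apply (is_derive_mult f g x df dg Hf Hg). intros; apply Rmult_comm. Qed.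

Lemma isd_plus (f g : R -> R) (x df dg : R) :
  is_derive f x df -> is_derive g x dg ->
  is_derive (fun y => f y + g y) x (df + dg).
Proof. intros Hf Hg. apply (is_derive_plus f g x df dg Hf Hg). Qed.

Lemma isd_ext (f g : R -> R) (x l : R) :
  (forall t : R, f t = g t) -> is_derive f x l -> is_derive g x l.
Proof. apply is_derive_ext. Qed.

Lemma taylor_deriv (D : nat -> R -> R) (h y : R) (M : nat) :
  (forall k, (k <= M)%nat -> is_derive (D k) y (D (S k) y)) ->
  is_derive (fun z => sum_f_R0 (fun k => D k z * (h - z) ^ k / INR (fact k)) M) y
    (D (S M) y * (h - y) ^ M / INR (fact M)).
Proof.
  induction M as [|M IH]; intros HD.
  - simpl. apply isd_ext with (fun z => D 0%nat z).
    { intros z. field. }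
    replace (D 1%nat y * 1 / 1) with (D 1%nat y) by field. apply HD; auto.
  - cbn [sum_f_R0].
    assert (Hp : is_derive (fun z => (h - z) ^ S M / INR (fact (S M))) y
                   (- (INR (S M) * (h - y) ^ M) / INR (fact (S M)))).
    { generalize (INR (fact (S M))). intros c. 
      apply isd_ext with (fun z => (h - z) ^ S M * / c). { intros; reflexivity. }
      replace (- (INR (S M) * (h - y) ^ M) / c) with ((INR (S M) * (-1) * (h - y) ^ (pred (S M))) * / c + (h - y) ^ S M * 0) by (unfold Rdiv; simpl pred; ring).
      apply (isd_mult (fun z => (h - z) ^ S M) (fun _ => / c)). apply (is_derive_pow (fun z => h - z) (S M) y (-1)).
      auto_derive; auto. auto_derive; auto. }
    assert (Ht := isd_mult _ _ _ _ _ (HD (S M) (le_n _)) Hp).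
    assert (Hs := isd_plus _ _ _ _ _ (IH (fun k Hk => HD k (le_S _ _ Hk))) Ht).
    eapply isd_ext; [|replace (D (S (S M)) y * (h - y) ^ S M / INR (fact (S M))) with
      (D (S M) y * (h - y) ^ M / INR (fact M) +
       (D (S (S M)) y * ((h - y) ^ S M / INR (fact (S M))) +
        D (S M) y * (- (INR (S M) * (h - y) ^ M) / INR (fact (S M)))));[exact Hs|]].
    + intros z. cbv beta. unfold Rdiv. ring.
    + rewrite fact_simpl, mult_INR. simpl pow. field. split. apply INR_fact_neq_0.
      apply not_0_INR. discriminate.
Qed.

Lemma flim_sum {T} (F : (T -> Prop) -> Prop) {FF : Filter F} (G : nat -> T -> R) (a : nat -> R) (M : nat) :
  (forall k, (k <= M)%nat -> filterlim (G k) F (locally (a k))) ->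
  filterlim (fun z => sum_f_R0 (fun k => G k z) M) F (locally (sum_f_R0 a M)).
Proof.
  induction M as [|M IH]; intros HG.
  - simpl. apply HG; auto.
  - cbn [sum_f_R0]. apply (flim_plus _ (fun z => sum_f_R0 (fun k => G k z) M) (G (S M))).
    apply IH. intros k Hk. apply HG; auto. apply HG; auto.
Qed.

Lemma sum_at_h (D : nat -> R -> R) (h : R) (M : nat) :
  sum_f_R0 (fun k => D k h * (h - h) ^ k / INR (fact k)) M = D 0%nat h.
Proof.
  induction M as [|M IH].
  - simpl. field.
  - cbn [sum_f_R0]. rewrite IH. replace (h - h) with 0 by ring. rewrite pow_i by lia.
    unfold Rdiv. ring.
Qed.

Lemma poly_right (h c : R) (k : nat) :
  filterlim (fun y => (h - y) ^ k * c) (at_right 0) (locally ((h - 0) ^ k * c)).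
Proof.
  apply (flim_right_of_cont (fun y => (h - y) ^ k * c)).
  apply (ex_derive_continuous (K := R_AbsRing) (fun y => (h - y) ^ k * c)). auto_derive. auto.
Qed.

Lemma taylor_lagrange (D : nat -> R -> R) (M : nat) (h : R) : 0 < h ->
  (forall k x, (k <= M)%nat -> 0 < x -> is_derive (D k) x (D (S k) x)) ->
  (forall k, (k <= M)%nat -> filterlim (D k) (at_right 0) (locally (D k 0))) ->
  exists xi, 0 < xi < h /\
    D 0%nat h = sum_f_R0 (fun k => D k 0 * h ^ k / INR (fact k)) M
                + D (S M) xi * h ^ (S M) / INR (fact (S M)).
Proof.
  intros Hh HD HC.
  set (psi := fun y => sum_f_R0 (fun k => D k y * (h - y) ^ k / INR (fact k)) M).
  assert (hpos : 0 < h ^ S M) by (apply pow_lt; auto).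
  set (K := (D 0%nat h - psi 0) / h ^ S M).
  set (phi := fun y => psi y + K * (h - y) ^ S M).
  set (dphi := fun y => D (S M) y * (h - y) ^ M / INR (fact M) + K * (INR (S M) * (-1) * (h - y) ^ M)).
  assert (Hphi : forall y, 0 < y -> is_derive phi y (dphi y)).
  { intros y Hy. unfold phi, dphi. apply isd_plus.
    - apply taylor_deriv. intros k Hk. apply HD; auto.
    - replace (K * (INR (S M) * -1 * (h - y) ^ M)) with
        (0 * (h - y) ^ S M + K * (INR (S M) * -1 * (h - y) ^ pred (S M))) by (simpl; ring).
      apply (isd_mult (fun _ => K) (fun y => (h - y) ^ S M)). auto_derive; auto.
      apply (is_derive_pow (fun z => h - z) (S M) y (-1)). auto_derive; auto. }
  destruct (Rolle_open phi dphi 0 h Hh) as [c [Hc1 Hc2]].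
  - unfold phi. apply (flim_plus _ psi (fun y => K * (h - y) ^ S M)).
    + unfold psi. apply (flim_sum _ (fun k y => D k y * (h - y) ^ k / INR (fact k))).
      intros k Hk. unfold Rdiv.
      apply (flim_mult _ (fun y => D k y * (h - y) ^ k) (fun _ => / INR (fact k))).
      apply (flim_mult _ (D k) (fun y => (h - y) ^ k)). apply HC; auto.
      replace ((h - 0) ^ k) with ((h - 0) ^ k * 1) by ring.
      apply (filterlim_ext (fun y => (h - y) ^ k * 1)). intros; ring. apply poly_right.
      apply filterlim_const.
    + apply (filterlim_ext (fun y => (h - y) ^ S M * K)). intros; ring.
      replace (K * (h - 0) ^ S M) with ((h - 0) ^ S M * K) by ring. apply poly_right.
  - intros x Hx. apply (ex_derive_continuous (K := R_AbsRing) phi). eexists. apply Hphi. lra.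
  - intros x Hx. apply Hphi. lra.
  - unfold phi. unfold psi at 2. rewrite sum_at_h. replace (h - h) with 0 by ring.
    rewrite pow_i by lia. rewrite Rminus_0_r. unfold K. field. lra.
  - exists c. split; auto.
    assert (Hnz : (h - c) ^ M <> 0) by (apply pow_nonzero; lra).
    assert (HK : K = D (S M) c / INR (fact (S M))).
    { unfold dphi in Hc2.
      assert (H1 : K * INR (S M) = D (S M) c / INR (fact M)).
      { apply (Rmult_eq_reg_r ((h - c) ^ M)); auto.
        replace (D (S M) c / INR (fact M) * (h - c) ^ M) with (D (S M) c * (h - c) ^ M / INR (fact M)) by (unfold Rdiv; ring).
        lra. }
      assert (Hn : INR (S M) <> 0) by (apply not_0_INR; discriminate).
      rewrite fact_simpl, mult_INR. apply (Rmult_eq_reg_r (INR (S M))); auto.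
      rewrite H1. field. split; auto. apply INR_fact_neq_0. }
    assert (E : D 0%nat h = psi 0 + K * h ^ S M) by (unfold K; field; lra).
    rewrite E, HK. unfold psi. rewrite Rminus_0_r. unfold Rdiv. ring.
Qed.

Fixpoint Nice (n : nat) (phi : R -> R) : Prop :=
  (exists l, filterlim phi (at_right 0) (locally l)) /\
  match n with
  | O => True
  | S n' => exists psi, (forall x, 0 < x -> is_derive phi x (psi x)) /\ Nice n' psi
  end.

Lemma Nice_lim n phi : Nice n phi -> exists l, filterlim phi (at_right 0) (locally l).
Proof. destruct n; simpl; tauto. Qed.

Lemma rderive_n_shift (j : nat) (g : R -> R) :
  rderive_n (S j) g = rderive_n j (rderive g).
Proof.
  induction j as [|j IH]; simpl; auto. simpl in IH. rewrite IH. reflexivity.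
Qed.

Lemma loc_pos (x : R) : 0 < x -> locally x (fun y => 0 < y).
Proof.
  intros Hx. exists (mkposreal x Hx). intros y Hy.
  assert (H : Rabs (y - x) < x) by apply Hy.
  apply Rabs_lt_between in H. lra.
Qed.

Lemma transfer (n : nat) : forall phi g, Nice n phi ->
  (forall x, 0 < x -> g x = phi x) ->
  filterlim phi (at_right 0) (locally (g 0)) ->
  forall j, (j <= n)%nat ->
    filterlim (rderive_n j g) (at_right 0) (locally (rderive_n j g 0)) /\
    ((j < n)%nat -> forall x, 0 < x -> is_derive (rderive_n j g) x (rderive_n (S j) g x)).
Proof.
  induction n as [|n IH]; intros phi g Hn Hg Hl j Hj.
  - assert (j = 0%nat) by lia. subst j. split; [|intros; lia]. simpl.
    apply (filterlim_ext_loc phi); auto. exists (mkposreal 1 Rlt_0_1). intros y _ Hy. symmetry; auto.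
  - destruct Hn as [_ [psi [Hd Hn']]].
    assert (Hgr : filterlim g (at_right 0) (locally (g 0))).
    { apply (filterlim_ext_loc phi); auto. exists (mkposreal 1 Rlt_0_1). intros y _ Hy. symmetry; auto. }
    assert (Hgd : forall x, 0 < x -> is_derive g x (psi x)).
    { intros x Hx. apply is_derive_ext_loc with phi; auto.
      generalize (loc_pos x Hx). apply filter_imp. intros y Hy. symmetry; auto. }
    assert (Hg' : forall x, 0 < x -> rderive g x = psi x).
    { intros x Hx. unfold rderive. destruct (Rlt_dec 0 x) as [_|C]; [|lra].
      apply is_derive_unique. auto. }
    destruct (Nice_lim _ _ Hn') as [l Hlim].
    assert (Hg0 : rderive g 0 = l).
    { unfold rderive. destruct (Rlt_dec 0 0) as [C|_]; [lra|].
      apply lim_filtermap_right. apply (right_deriv g psi); auto. }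
    assert (Hl' : filterlim psi (at_right 0) (locally (rderive g 0))) by (rewrite Hg0; auto).
    destruct j as [|j].
    + split. simpl. auto. intros _ x Hx. simpl. rewrite Hg'; auto.
    + rewrite (rderive_n_shift (S j) g), (rderive_n_shift j g).
      destruct (IH psi (rderive g) Hn' Hg' Hl' j) as [A B]; [lia|].
      split; auto. intros Hjn. apply B. lia.
Qed.

Lemma Nice_S n : forall phi, Nice (S n) phi -> Nice n phi.
Proof.
  induction n as [|n IH]; intros phi [Hl [psi [Hd Hn]]]; simpl.
  - split; auto.
  - split; auto. exists psi. split; auto.
Qed.

Lemma Nice_le n m phi : (m <= n)%nat -> Nice n phi -> Nice m phi.
Proof. induction 1; auto. intros H'. apply IHle. apply Nice_S; auto. Qed.

Lemma Nice_scal n : forall c phi, Nice n phi -> Nice n (fun x => c * phi x).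
Proof.
  induction n as [|n IH]; intros c phi Hn.
  - destruct Hn as [[l Hl] _]. split; auto. exists (c * l).
    apply (flim_mult _ (fun _ => c) phi). apply filterlim_const. auto.
  - destruct Hn as [[l Hl] [psi [Hd Hn]]]. split.
    + exists (c * l). apply (flim_mult _ (fun _ => c) phi). apply filterlim_const. auto.
    + exists (fun x => c * psi x). split; auto. intros x Hx.
      replace (c * psi x) with (0 * phi x + c * psi x) by ring.
      apply (isd_mult (fun _ => c) phi). auto_derive; auto. auto.
Qed.

Lemma Nice_plus n : forall phi chi, Nice n phi -> Nice n chi -> Nice n (fun x => phi x + chi x).
Proof.
  induction n as [|n IH]; intros phi chi H1 H2.
  - destruct H1 as [[l1 L1] _]; destruct H2 as [[l2 L2] _]. split; auto.
    exists (l1 + l2). apply (flim_plus _ phi chi); auto.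
  - destruct H1 as [[l1 L1] [p1 [D1 N1]]]; destruct H2 as [[l2 L2] [p2 [D2 N2]]]. split.
    + exists (l1 + l2). apply (flim_plus _ phi chi); auto.
    + exists (fun x => p1 x + p2 x). split; auto. intros x Hx. apply isd_plus; auto.
Qed.

Lemma Nice_mult n : forall phi chi, Nice n phi -> Nice n chi -> Nice n (fun x => phi x * chi x).
Proof.
  induction n as [|n IH]; intros phi chi H1 H2.
  - destruct H1 as [[l1 L1] _]; destruct H2 as [[l2 L2] _]. split; auto.
    exists (l1 * l2). apply (flim_mult _ phi chi); auto.
  - assert (H1' := Nice_S _ _ H1). assert (H2' := Nice_S _ _ H2).
    destruct H1 as [[l1 L1] [p1 [D1 N1]]]; destruct H2 as [[l2 L2] [p2 [D2 N2]]]. split.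
    + exists (l1 * l2). apply (flim_mult _ phi chi); auto.
    + exists (fun x => p1 x * chi x + phi x * p2 x). split.
      * intros x Hx. apply isd_mult; auto.
      * apply (Nice_plus n (fun x => p1 x * chi x) (fun x => phi x * p2 x)); apply IH; auto.
Qed.

Lemma Nice_exp n : forall phi, Nice n phi -> Nice n (fun x => exp (phi x)).
Proof.
  induction n as [|n IH]; intros phi H1.
  - destruct H1 as [[l1 L1] _]. split; auto. exists (exp l1).
    apply (filterlim_comp _ _ _ phi exp _ (locally l1)); auto. apply continuous_exp.
  - assert (H1' := Nice_S _ _ H1).
    destruct H1 as [[l1 L1] [p1 [D1 N1]]]. split.
    + exists (exp l1). apply (filterlim_comp _ _ _ phi exp _ (locally l1)); auto. apply continuous_exp.
    + exists (fun x => exp (phi x) * p1 x). split.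
      * intros x Hx. rewrite Rmult_comm. apply (is_derive_comp exp phi x (exp (phi x)) (p1 x)).
        apply is_derive_exp. auto.
      * apply (Nice_mult n (fun x => exp (phi x)) p1); auto.
Qed.

Lemma lim_ratio_pow (j : nat) :
  is_lim_seq (fun n => (INR (S (S n)) / INR (S n)) ^ j) 1.
Proof.
  assert (H0 : is_lim_seq (fun n => / INR (S n)) 0).
  { apply (is_lim_seq_incr_1 (fun n => / INR n)).
    replace (Finite 0) with (Rbar_inv p_infty) by reflexivity.
    apply is_lim_seq_inv. apply is_lim_seq_INR. discriminate. }
  assert (H1 : is_lim_seq (fun n => INR (S (S n)) / INR (S n)) 1).
  { apply is_lim_seq_ext with (fun n => 1 + / INR (S n)).
    - intros n. rewrite (S_INR (S n)). field. apply not_0_INR. discriminate.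
    - replace (Finite 1) with (Finite (1 + 0)) by (f_equal; ring).
      apply is_lim_seq_plus'; auto. apply is_lim_seq_const. }
  induction j as [|j IH].
  - simpl. apply is_lim_seq_const.
  - simpl. replace (Finite 1) with (Finite (1 * 1)) by (f_equal; ring). apply is_lim_seq_mult'; auto.
Qed.

Lemma ex_series_pow (t : R) (j : nat) : 1 < t ->
  ex_series (fun m => / t ^ m * INR m ^ j).
Proof.
  intros Ht.
  apply ex_series_incr_1.
  apply ex_series_Rabs.
  apply (ex_series_DAlembert _ (/ t)).
  - rewrite <- Rinv_1. apply Rinv_lt_contravar; lra.
  - intros n. apply Rmult_integral_contrapositive. split.
    apply Rinv_neq_0_compat, pow_nonzero; lra. apply pow_nonzero, not_0_INR; discriminate.
  - apply is_lim_seq_ext with (fun n => / t * (INR (S (S n)) / INR (S n)) ^ j).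
    + intros n. rewrite Rabs_right.
      * unfold Rdiv. rewrite Rpow_mult_distr, pow_inv. rewrite <- (tech_pow_Rmult t (S n)).
        assert (t ^ S n <> 0) by (apply pow_nonzero; lra).
        assert (INR (S n) ^ j <> 0) by (apply pow_nonzero, not_0_INR; discriminate).
        field. repeat split; auto; lra.
      * apply Rle_ge. apply Rmult_le_pos. 
        apply Rmult_le_pos; [left; apply Rinv_0_lt_compat, pow_lt; lra | apply pow_le, pos_INR].
        left; apply Rinv_0_lt_compat. apply Rmult_lt_0_compat.
        apply Rinv_0_lt_compat, pow_lt; lra. apply pow_lt, lt_0_INR; lia.
    + replace (Finite (/ t)) with (Rbar_mult (/ t) 1) by (simpl; f_equal; ring).
      apply (is_lim_seq_scal_l _ (/ t) 1). apply lim_ratio_pow.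
Qed.

Lemma ex_series_dom (v M : nat -> R) :
  ex_series M -> (forall m, Rabs (v m) <= M m) -> ex_series v.
Proof. intros HM Hv. apply (ex_series_le v M); auto. Qed.

Lemma tail_bound (v M : nat -> R) (n : nat) :
  ex_series M -> (forall m, Rabs (v m) <= M m) ->
  Rabs (Series v - sum_n v n) <= Series M - sum_n M n.
Proof.
  intros HM Hv.
  assert (Hev : ex_series v) by (apply ex_series_dom with M; auto).
  rewrite (Series_incr_n v (S n)) by (lia || auto).
  rewrite (Series_incr_n M (S n)) by (lia || auto).
  rewrite !sum_n_Reals. simpl pred.
  replace (sum_f_R0 v n + Series (fun k => v (S n + k)%nat) - sum_f_R0 v n)
    with (Series (fun k => v (S n + k)%nat)) by ring.
  replace (sum_f_R0 M n + Series (fun k => M (S n + k)%nat) - sum_f_R0 M n)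
    with (Series (fun k => M (S n + k)%nat)) by ring.
  assert (HMt : ex_series (fun k => M (S n + k)%nat)) by (apply (ex_series_incr_n M (S n)); auto).
  eapply Rle_trans. apply Series_Rabs.
  - apply ex_series_dom with (fun k => M (S n + k)%nat); auto. intros m. rewrite Rabs_Rabsolu. auto.
  - apply Series_le; auto. intros m. split. apply Rabs_pos. auto.
Qed.

Lemma Mtest (fn v : nat -> R -> R) (M : nat -> R) (D : R -> Prop) :
  ex_series M -> (forall m x, D x -> Rabs (v m x) <= M m) ->
  (forall n x, D x -> fn n x = sum_n (fun m => v m x) n) -> CVU_dom fn D.
Proof.
  intros HM Hv Hf eps.
  assert (HL := Series_correct M HM).
  destruct (HL (ball (Series M) eps) (locally_ball _ _)) as [N HN].
  exists N. intros n Hn x Dx.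
  rewrite (Lim_seq_ext _ (fun k => sum_n (fun m => v m x) k)) by (intros; apply Hf; auto).
  rewrite Hf by auto.
  change (Rabs (sum_n (fun m => v m x) n - Series (fun m => v m x)) < eps).
  rewrite Rabs_minus_sym.
  eapply Rle_lt_trans. apply tail_bound; [exact HM| intros m; apply Hv; auto].
  specialize (HN n Hn). assert (H := HN). 
  assert (Hb : Rabs (sum_n M n - Series M) < eps) by apply H.
  apply Rabs_lt_between in Hb. lra.
Qed.

Lemma cont_sum_n (v : nat -> R -> R) (x : R) (n : nat) :
  (forall m, continuous (v m) x) -> continuous (fun y => sum_n (fun m => v m y) n) x.
Proof.
  intros Hv. induction n as [|n IH].
  - apply (continuous_ext (v 0%nat)). intros; rewrite sum_O; auto. auto.
  - apply (continuous_ext (fun y => sum_n (fun m => v m y) n + v (S n) y)).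
    intros; rewrite sum_Sn; auto. apply (continuous_plus (fun y => sum_n (fun m => v m y) n) (v (S n))); auto.
Qed.

Lemma series_deriv (u du : nat -> R -> R) (M1 M2 : nat -> R) (a b : R) :
  ex_series M1 -> ex_series M2 ->
  (forall m x, a < x < b -> Rabs (u m x) <= M1 m) ->
  (forall m x, a < x < b -> Rabs (du m x) <= M2 m) ->
  (forall m x, a < x < b -> is_derive (u m) x (du m x)) ->
  (forall m x, a < x < b -> continuous (du m) x) ->
  forall x, a < x < b ->
    is_derive (fun y => Series (fun m => u m y)) x (Series (fun m => du m x)).
Proof.
  intros H1 H2 B1 B2 Hd Hc x Hx.
  set (D := fun y => a < y /\ y < b).
  set (fn := fun n y => sum_n (fun m => u m y) n).
  assert (oD : open D) by (apply open_and; [apply open_gt|apply open_lt]).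
  assert (Hfd : forall n y, D y -> is_derive (fn n) y (sum_n (fun m => du m y) n)).
  { intros n y Dy. unfold fn. apply (is_derive_sum_n (fun m y => u m y)). intros k _. apply Hd. exact Dy. }
  assert (HDf : forall n y, D y -> Derive (fn n) y = sum_n (fun m => du m y) n).
  { intros n y Dy. apply is_derive_unique. auto. }
  assert (C := CVU_Derive fn D oD).
  assert (Hcon : is_connected D) by (intros p q z [Hp _] [_ Hq] Hz; split; lra).
  specialize (C Hcon).
  assert (Hcvu : CVU_dom fn D) by (apply (Mtest fn u M1 D); auto).
  specialize (C Hcvu).
  assert (Hex : forall n y, D y -> ex_derive (fn n) y) by (intros n y Dy; eexists; apply Hfd; auto).
  specialize (C Hex).
  assert (Hcd : forall n y, D y -> continuity_pt (Derive (fn n)) y).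
  { intros n y Dy. apply continuity_pt_filterlim.
    change (continuous (Derive (fn n)) y).
    apply (continuous_ext_loc (Derive (fn n)) (fun z => sum_n (fun m => du m z) n) y).
    - destruct (oD y Dy) as [e He]. exists e. intros z Hz. symmetry. apply HDf. apply He. exact Hz.
    - apply cont_sum_n. intros m. apply Hc. exact Dy. }
  specialize (C Hcd).
  assert (Hcvu' : CVU_dom (fun n y => Derive (fn n) y) D).
  { apply (Mtest _ du M2 D); auto. }
  specialize (C Hcvu' x Hx).
  unfold Series at 2. rewrite <- (Lim_seq_ext (fun n => Derive (fn n) x)).
  2: { intros n. apply HDf. exact Hx. }
  exact C.
Qed.

Lemma series_right_cont (u : nat -> R -> R) (M : nat -> R) (r : R) : 0 < r ->
  ex_series M ->
  (forall m x, 0 <= x < r -> Rabs (u m x) <= M m) ->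
  (forall m x, 0 <= x < r -> continuous (u m) x) ->
  filterlim (fun y => Series (fun m => u m y)) (at_right 0) (locally (Series (fun m => u m 0))).
Proof.
  intros Hr HM B Hc.
  set (D := fun y => - r < y /\ y < r).
  set (fn := fun n y => sum_n (fun m => u m (Rabs y)) n).
  assert (oD : open D) by (apply open_and; [apply open_gt|apply open_lt]).
  assert (HD : forall y, D y -> 0 <= Rabs y < r).
  { intros y [Hy1 Hy2]. split. apply Rabs_pos. apply Rabs_def1; lra. }
  assert (Hcvu : CVU_dom fn D).
  { apply (Mtest fn (fun m y => u m (Rabs y)) M D); auto. }
  assert (C := CVU_cont_open fn D oD Hcvu).
  assert (D0 : D 0) by (unfold D; lra).
  assert (C0 : continuity_pt (fun y => Lim_seq (fun n => fn n y)) 0).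
  { apply C; auto. intros n x Dx. apply continuity_pt_filterlim. unfold fn.
    apply (cont_sum_n (fun m y => u m (Rabs y))). intros m.
    apply (continuous_comp Rabs (u m)). apply continuous_Rabs. apply Hc. auto. }
  apply continuity_pt_filterlim in C0.
  apply flim_right_of_cont in C0.
  unfold fn in C0. rewrite Rabs_R0 in C0.
  apply (filterlim_ext_loc (fun y => Series (fun m => u m (Rabs y)))); auto.
  exists (mkposreal 1 Rlt_0_1). intros y _ Hy. rewrite Rabs_right by lra. reflexivity.
Qed.

Definition uL (t : R) (m : nat) (x : R) := / t ^ m * ln (1 + INR m * x).
Definition uk (t : R) (k m : nat) (x : R) := / t ^ m * (INR m / (1 + INR m * x)) ^ k.
Definition Lf (t x : R) := Series (fun m => uL t m x).
Definition ell (t : R) (k : nat) (x : R) := Series (fun m => uk t k m x).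

Lemma ln1p_le (y : R) : 0 <= y -> 0 <= ln (1 + y) <= y.
Proof.
  intros Hy. split.
  - rewrite <- ln_1. apply ln_le; lra.
  - destruct (Req_dec y 0) as [->|Hy0].
    + rewrite Rplus_0_r, ln_1. lra.
    + rewrite <- (ln_exp y) at 2. left. apply ln_increasing. lra. apply exp_ineq1. auto.
Qed.

Lemma ratio_bounds (m : nat) (x : R) : 0 <= x -> 0 <= INR m / (1 + INR m * x) <= INR m.
Proof.
  intros Hx. assert (Hm := pos_INR m). assert (0 <= INR m * x) by (apply Rmult_le_pos; auto).
  split.
  - apply Rmult_le_pos; auto. left; apply Rinv_0_lt_compat; lra.
  - unfold Rdiv. assert (/ (1 + INR m * x) <= 1) by (rewrite <- Rinv_1; apply Rinv_le_contravar; lra).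
    nra.
Qed.

Lemma tinv_pos (t : R) (m : nat) : 1 < t -> 0 < / t ^ m.
Proof. intros Ht. apply Rinv_0_lt_compat, pow_lt. lra. Qed.

Lemma uk_bound (t : R) (k m : nat) (x : R) : 1 < t -> 0 <= x ->
  Rabs (uk t k m x) <= / t ^ m * INR m ^ k.
Proof.
  intros Ht Hx. unfold uk. assert (H := ratio_bounds m x Hx). assert (Hp := tinv_pos t m Ht).
  rewrite Rabs_right.
  - apply Rmult_le_compat_l. lra. apply pow_incr. auto.
  - apply Rle_ge, Rmult_le_pos. lra. apply pow_le. lra.
Qed.

Lemma uk_deriv (t : R) (k m : nat) (x : R) : 1 < t -> 0 < 1 + INR m * x ->
  is_derive (uk t k m) x (- INR k * uk t (S k) m x).
Proof.
  intros Ht Hx. unfold uk.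
  assert (Hne : 1 + INR m * x <> 0) by lra.
  auto_derive. auto.
  destruct k as [|k].
  - simpl. ring.
  - simpl pred. rewrite <- (tech_pow_Rmult _ (S k)). rewrite <- (tech_pow_Rmult _ k).
    rewrite Rinv_mult. unfold Rdiv. ring.
Qed.

Lemma uk_cont (t : R) (k m : nat) (x : R) : 1 < t -> 0 < 1 + INR m * x -> continuous (uk t k m) x.
Proof.
  intros Ht Hx. apply (ex_derive_continuous (K := R_AbsRing) (uk t k m)). eexists. apply uk_deriv; auto.
Qed.

Lemma uL_deriv (t : R) (m : nat) (x : R) : 1 < t -> 0 < 1 + INR m * x ->
  is_derive (uL t m) x (uk t 1 m x).
Proof.
  intros Ht Hx. unfold uL, uk. auto_derive. auto. unfold Rdiv. ring.
Qed.

Lemma ex_series_pow_scal (t c : R) (j : nat) : 1 < t ->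
  ex_series (fun m => c * (/ t ^ m * INR m ^ j)).
Proof. intros Ht. apply (ex_series_scal_l c (fun m => / t ^ m * INR m ^ j)). apply ex_series_pow; auto. Qed.

Lemma ell_deriv (t : R) (k : nat) (x : R) : 1 < t -> 0 < x ->
  is_derive (ell t k) x (- INR k * ell t (S k) x).
Proof.
  intros Ht Hx. unfold ell. rewrite <- Series_scal_l.
  apply (series_deriv (uk t k) (fun m y => - INR k * uk t (S k) m y)
          (fun m => / t ^ m * INR m ^ k) (fun m => INR k * (/ t ^ m * INR m ^ S k)) 0 (x + 1)).
  - apply ex_series_pow; auto.
  - apply ex_series_pow_scal; auto.
  - intros m y Hy. apply uk_bound; auto; lra.
  - intros m y Hy. rewrite Rabs_mult, Rabs_Ropp, Rabs_right by (apply Rle_ge, pos_INR).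
    apply Rmult_le_compat_l. apply pos_INR. apply uk_bound; auto; lra.
  - intros m y Hy. apply uk_deriv; auto. assert (0 <= INR m * y) by (apply Rmult_le_pos; [apply pos_INR|lra]). lra.
  - intros m y Hy. apply (continuous_scal_r (K := R_AbsRing) (- INR k) (uk t (S k) m)).
    apply uk_cont; auto. assert (0 <= INR m * y) by (apply Rmult_le_pos; [apply pos_INR|lra]). lra.
  - lra.
Qed.

Lemma Lf_deriv (t x : R) : 1 < t -> 0 < x -> is_derive (Lf t) x (ell t 1 x).
Proof.
  intros Ht Hx. unfold Lf, ell.
  apply (series_deriv (uL t) (uk t 1) (fun m => (x + 1) * (/ t ^ m * INR m ^ 1))
          (fun m => / t ^ m * INR m ^ 1) 0 (x + 1)).
  - apply ex_series_pow_scal; auto.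
  - apply ex_series_pow; auto.
  - intros m y Hy. unfold uL. assert (Hm := pos_INR m). assert (Hp := tinv_pos t m Ht).
    assert (0 <= INR m * y) by (apply Rmult_le_pos; lra).
    destruct (ln1p_le (INR m * y)) as [A B]; auto.
    rewrite Rabs_right by (apply Rle_ge, Rmult_le_pos; lra). simpl pow. rewrite Rmult_1_r.
    assert (INR m * y <= INR m * (x + 1)) by (apply Rmult_le_compat_l; lra). nra.
  - intros m y Hy. apply uk_bound; auto; lra.
  - intros m y Hy. apply uL_deriv; auto. assert (0 <= INR m * y) by (apply Rmult_le_pos; [apply pos_INR|lra]). lra.
  - intros m y Hy. apply uk_cont; auto. assert (0 <= INR m * y) by (apply Rmult_le_pos; [apply pos_INR|lra]). lra.
  - lra.
Qed.

Lemma ell_right (t : R) (k : nat) : 1 < t ->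
  filterlim (ell t k) (at_right 0) (locally (ell t k 0)).
Proof.
  intros Ht. unfold ell.
  apply (series_right_cont (uk t k) (fun m => / t ^ m * INR m ^ k) 1 Rlt_0_1).
  - apply ex_series_pow; auto.
  - intros m x Hx. apply uk_bound; auto; lra.
  - intros m x Hx. apply uk_cont; auto. assert (0 <= INR m * x) by (apply Rmult_le_pos; [apply pos_INR|lra]). lra.
Qed.

Lemma Lf_0 (t : R) : Lf t 0 = 0.
Proof.
  unfold Lf, uL. rewrite (Series_ext _ (fun m => 0 * / t ^ m)).
  - rewrite Series_scal_l. ring.
  - intros m. rewrite Rmult_0_r, Rplus_0_r, ln_1. ring.
Qed.

Lemma Lf_right (t : R) : 1 < t -> filterlim (Lf t) (at_right 0) (locally 0).
Proof.
  intros Ht. rewrite <- (Lf_0 t) at 2. unfold Lf.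
  apply (series_right_cont (uL t) (fun m => / t ^ m * INR m ^ 1) 1 Rlt_0_1).
  - apply ex_series_pow; auto.
  - intros m y Hy. unfold uL. assert (Hm := pos_INR m). assert (Hp := tinv_pos t m Ht).
    assert (0 <= INR m * y) by (apply Rmult_le_pos; lra).
    destruct (ln1p_le (INR m * y)) as [A B]; auto.
    rewrite Rabs_right by (apply Rle_ge, Rmult_le_pos; lra). simpl pow. rewrite Rmult_1_r.
    assert (INR m * y <= INR m * 1) by (apply Rmult_le_compat_l; lra). nra.
  - intros m x Hx. apply (ex_derive_continuous (K := R_AbsRing) (uL t m)). eexists. apply uL_deriv; auto.
    assert (0 <= INR m * x) by (apply Rmult_le_pos; [apply pos_INR|lra]). lra.
Qed.

Lemma Nice_ell (t : R) n : 1 < t -> forall k, Nice n (ell t k).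
Proof.
  intros Ht. induction n as [|n IH]; intros k.
  - split; auto. exists (ell t k 0). apply ell_right; auto.
  - split. exists (ell t k 0). apply ell_right; auto.
    exists (fun x => - INR k * ell t (S k) x). split.
    + intros x Hx. apply ell_deriv; auto.
    + apply Nice_scal. apply IH.
Qed.

Lemma Nice_f (t : R) n : 1 < t -> Nice n (fun x => exp (Lf t x)).
Proof.
  intros Ht. apply Nice_exp. destruct n as [|n].
  - split; auto. exists 0. apply Lf_right; auto.
  - split. exists 0. apply Lf_right; auto.
    exists (ell t 1). split. intros x Hx. apply Lf_deriv; auto. apply Nice_ell; auto.
Qed.

Lemma ln_0 : ln 0 = 0.
Proof. unfold ln. destruct (Rlt_dec 0 0) as [r|r]; [exfalso; lra|reflexivity]. Qed.

Lemma prod1_exp (t : R) (c b : nat -> R) :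
  (forall m, b m = / t ^ m * ln (c m)) -> ln (c 0%nat) = 0 ->
  forall M, prod1 (fun m => Rpower (c m) (/ t ^ m)) M = exp (sum_n b M).
Proof.
  intros Hb H0 M. induction M as [|M IH].
  - simpl. rewrite sum_O, Hb, H0, Rmult_0_r, exp_0. reflexivity.
  - simpl prod1. rewrite IH, sum_Sn. unfold Rpower. rewrite (Hb (S M)).
    change (plus (sum_n b M) (/ t ^ S M * ln (c (S M)))) with (sum_n b M + / t ^ S M * ln (c (S M))).
    rewrite exp_plus. reflexivity.
Qed.

Lemma inf_prod_exp (t : R) (c b : nat -> R) (S : R) :
  (forall m, b m = / t ^ m * ln (c m)) -> ln (c 0%nat) = 0 -> is_series b S ->
  inf_prod (fun m => Rpower (c m) (/ t ^ m)) = exp S.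
Proof.
  intros Hb H0 HS. unfold inf_prod.
  rewrite (Lim_seq_ext _ (fun M => exp (sum_n b M))) by (apply prod1_exp; auto).
  rewrite (is_lim_seq_unique _ (exp S)). reflexivity.
  apply (is_lim_seq_continuous exp (sum_n b) S).
  apply continuity_pt_filterlim. apply continuous_exp. apply HS.
Qed.

Lemma ex_series_uL (t x : R) : 1 < t -> 0 <= x -> ex_series (fun m => uL t m x).
Proof.
  intros Ht Hx. apply ex_series_dom with (fun m => x * (/ t ^ m * INR m ^ 1)).
  apply ex_series_pow_scal; auto.
  intros m. unfold uL. assert (Hm := pos_INR m). assert (Hp := tinv_pos t m Ht).
  assert (0 <= INR m * x) by (apply Rmult_le_pos; lra).
  destruct (ln1p_le (INR m * x)) as [A B]; auto.
  rewrite Rabs_right by (apply Rle_ge, Rmult_le_pos; lra). simpl pow. rewrite Rmult_1_r. nra.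
Qed.

Lemma f_t_exp (t x : R) : 1 < t -> 0 <= x -> f_t t x = exp (Lf t x).
Proof.
  intros Ht Hx. unfold f_t, Lf.
  apply (inf_prod_exp t (fun m => 1 + INR m * x) (fun m => uL t m x)).
  - intros m. reflexivity.
  - simpl. rewrite Rmult_0_l, Rplus_0_r. apply ln_1.
  - apply Series_correct. apply ex_series_uL; auto.
Qed.

Definition bs (t : R) (m : nat) := / t ^ m * ln (INR m).

Lemma ex_series_bs (t : R) : 1 < t -> ex_series (bs t).
Proof.
  intros Ht. apply ex_series_dom with (fun m => / t ^ m * INR m ^ 1).
  apply ex_series_pow; auto.
  intros m. unfold bs. assert (Hp := tinv_pos t m Ht). simpl pow. rewrite Rmult_1_r.
  destruct m as [|m].
  - simpl. rewrite ln_0, Rmult_0_r, Rabs_R0. lra.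
  - assert (H1 := ln1p_le (INR m) (pos_INR m)).
    replace (1 + INR m) with (INR (S m)) in H1 by (rewrite S_INR; ring).
    rewrite S_INR. rewrite S_INR in H1.
    rewrite Rabs_right by (apply Rle_ge, Rmult_le_pos; lra). 
    apply Rmult_le_compat_l; lra.
Qed.

Lemma sigma_exp (t : R) : 1 < t -> sigma_t t = exp (Series (bs t)).
Proof.
  intros Ht. unfold sigma_t.
  apply (inf_prod_exp t INR (bs t)).
  - intros; reflexivity.
  - simpl. apply ln_0.
  - apply Series_correct, ex_series_bs; auto.
Qed.

Lemma g_exp (t : R) (n : nat) : 1 < t -> g_seq t n = exp (t ^ n * sum_n (bs t) n).
Proof.
  intros Ht. induction n as [|n IH].
  - simpl. rewrite sum_O. unfold bs. simpl. rewrite ln_0. rewrite !Rmult_0_r, exp_0. reflexivity.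
  - cbn [g_seq]. rewrite IH. rewrite sum_Sn. unfold Rpower. rewrite ln_exp.
    change (plus (sum_n (bs t) n) (bs t (S n))) with (sum_n (bs t) n + bs t (S n)).
    replace (t ^ S n * (sum_n (bs t) n + bs t (S n)))
      with (t * (t ^ n * sum_n (bs t) n) + ln (INR (S n))).
    + rewrite exp_plus, exp_ln by (apply lt_0_INR; lia). ring.
    + replace (bs t (S n)) with (/ t ^ S n * ln (INR (S n))) by reflexivity.
      simpl. field. split; [apply pow_nonzero|]; lra.
Qed.

Lemma key_identity (t : R) (n : nat) : 1 < t -> (1 <= n)%nat ->
  t ^ n * sum_n (bs t) n =
  t ^ n * Series (bs t) - (1 / (t - 1)) * ln (INR n) - Lf t (/ INR n).
Proof.
  intros Ht Hn.
  assert (Htn : t ^ n <> 0) by (apply pow_nonzero; lra).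
  assert (HnR : 0 < INR n) by (apply lt_0_INR; lia).
  set (cS := fun k => / t ^ k * ln (INR n + INR k)).
  assert (Hbs := ex_series_bs t Ht).
  assert (H1 : Series (bs t) = sum_n (bs t) (pred n) + Series (fun k => bs t (n + k)%nat)).
  { rewrite (Series_incr_n (bs t) n) by (lia || auto). rewrite sum_n_Reals. reflexivity. }
  assert (Ec : forall k, t ^ n * bs t (n + k) = cS k).
  { intros k. unfold bs, cS. rewrite pow_add, plus_INR. field. split; auto. apply pow_nonzero; lra. }
  assert (Hexs : ex_series (fun k => bs t (n + k)%nat)) by (apply (ex_series_incr_n (bs t) n); auto).
  assert (Hexc : ex_series cS).
  { apply (ex_series_ext (fun k => t ^ n * bs t (n + k)%nat)); auto.
    apply (ex_series_scal_l (t ^ n) (fun k => bs t (n + k)%nat)); auto. }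
  assert (H2 : t ^ n * Series (fun k => bs t (n + k)%nat) = Series cS).
  { rewrite <- Series_scal_l. apply Series_ext. auto. }
  assert (Hq : Rabs (/ t) < 1).
  { rewrite Rabs_right. rewrite <- Rinv_1. apply Rinv_lt_contravar; lra.
    apply Rle_ge; left; apply Rinv_0_lt_compat; lra. }
  assert (Hg := is_series_geom (/ t) Hq).
  assert (Hg' : is_series (fun m => ln (INR n) * (/ t) ^ m) (ln (INR n) * / (1 - / t)))
    by (apply (is_series_scal_l (ln (INR n)) (fun m => (/ t) ^ m)); auto).
  assert (H3 : Lf t (/ INR n) = Series cS - ln (INR n) * / (1 - / t)).
  { unfold Lf. rewrite <- (is_series_unique _ _ Hg'). rewrite <- Series_minus; auto.
    2: { eexists; eauto. }
    apply Series_ext. intros m. unfold uL, cS. rewrite pow_inv.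
    replace (1 + INR m * / INR n) with ((INR n + INR m) / INR n) by (field; lra).
    assert (Hm := pos_INR m). rewrite ln_div; lra. }
  assert (H4 : sum_n (bs t) n = sum_n (bs t) (pred n) + bs t n).
  { destruct n as [|n']; [lia|]. simpl pred. rewrite sum_Sn. reflexivity. }
  assert (H5 : t ^ n * bs t n = ln (INR n)) by (unfold bs; field; auto).
  rewrite H3, H1, H4, Rmult_plus_distr_l, Rmult_plus_distr_l, H5, H2.
  field. split; lra.
Qed.

From Stdlib Require Import IndefiniteDescription.

Lemma g_formula (t : R) (n : nat) : 1 < t -> (1 <= n)%nat ->
  g_seq t n = Rpower (sigma_t t) (t ^ n) * Rpower (INR n) (- (1 / (t - 1))) * / f_t t (/ INR n).
Proof.
  intros Ht Hn.
  assert (HnR : 0 < INR n) by (apply lt_0_INR; lia).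
  rewrite g_exp, sigma_exp, f_t_exp by (auto; left; apply Rinv_0_lt_compat; auto).
  unfold Rpower. rewrite ln_exp. rewrite key_identity by auto.
  rewrite <- exp_Ropp, <- !exp_plus. f_equal. ring.
Qed.

Lemma sum_conv (D : nat -> R -> R) (n M : nat) : (1 <= M)%nat -> 0 < INR n ->
  sum_f_R0 (fun k => D k 0 * (/ INR n) ^ k / INR (fact k)) M =
  D 0%nat 0 + sum_f 1 M (fun k => / (INR n ^ k * INR (fact k)) * D k 0).
Proof.
  intros HM Hn. rewrite decomp_sum by lia. unfold sum_f.
  replace (M - 1)%nat with (pred M) by lia.
  f_equal.
  - simpl. field.
  - apply sum_eq. intros i _. rewrite Nat.add_1_r. rewrite pow_inv.
    field. split. apply INR_fact_neq_0. apply pow_nonzero. lra.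
Qed.

Lemma lim_2_over (x : unit) : is_lim_seq (fun n => 2 / INR (S n)) 0.
Proof.
  apply (is_lim_seq_incr_1 (fun n => 2 / INR n)).
  replace (Finite 0) with (Rbar_mult 2 (Rbar_inv p_infty)) by (simpl; f_equal; ring).
  apply (is_lim_seq_scal_l (fun n => / INR n) 2).
  apply is_lim_seq_inv. apply is_lim_seq_INR. discriminate.
Qed.

Theorem lemma21 (t : R) (N : nat) :
  1 < t -> (2 <= N)%nat ->
  exists mu : nat -> R,
    (forall n : nat, (1 <= n)%nat ->
       0 < mu n /\
       g_seq t n =
         Rpower (sigma_t t) (t ^ n) * Rpower (INR n) (- (1 / (t - 1))) *
         / (1 + sum_f 1 (N - 1)
                  (fun k => / (INR n ^ k * INR (fact k)) * rderive_n k (f_t t) 0)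
              + / (INR n ^ N * INR (fact N)) * rderive_n N (f_t t) (mu n)))
    /\ is_lim_seq mu 0
    /\ is_lim_seq (fun n => rderive_n N (f_t t) (mu n)) (rderive_n N (f_t t) 0).
Proof.
  intros Ht HN.
  set (D := fun k => rderive_n k (f_t t)).
  assert (Hf0 : f_t t 0 = 1) by (rewrite f_t_exp, Lf_0, exp_0 by lra; reflexivity).
  assert (TR := transfer N (fun x => exp (Lf t x)) (f_t t) (Nice_f t N Ht)).
  assert (TR' : forall j, (j <= N)%nat ->
    filterlim (D j) (at_right 0) (locally (D j 0)) /\
    ((j < N)%nat -> forall x, 0 < x -> is_derive (D j) x (D (S j) x))).
  { apply TR.
    - intros x Hx. apply f_t_exp; lra.
    - rewrite Hf0, <- exp_0. apply (filterlim_comp _ _ _ (Lf t) exp _ (locally 0)).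
      apply Lf_right; auto. apply continuous_exp. }
  clear TR.
  destruct N as [|M]; [lia|].
  assert (Hex : forall n, exists xi, 0 < xi /\ xi < 2 / INR (S n) /\
     ((1 <= n)%nat ->
       g_seq t n =
         Rpower (sigma_t t) (t ^ n) * Rpower (INR n) (- (1 / (t - 1))) *
         / (1 + sum_f 1 (S M - 1)
                  (fun k => / (INR n ^ k * INR (fact k)) * rderive_n k (f_t t) 0)
              + / (INR n ^ S M * INR (fact (S M))) * rderive_n (S M) (f_t t) xi))).
  { intros n. destruct n as [|n'].
    - exists 1. split; [lra|]. split. simpl. lra. intros; lia.
    - set (n := S n'). assert (HnR : 0 < INR n) by (apply lt_0_INR; unfold n; lia).
      assert (Hh : 0 < / INR n) by (apply Rinv_0_lt_compat; auto).
      destruct (taylor_lagrange D M (/ INR n) Hh) as [xi [Hxi HT]].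
      + intros k x Hk Hx. apply (proj2 (TR' k ltac:(lia))). lia. auto.
      + intros k Hk. apply (proj1 (TR' k ltac:(lia))).
      + exists xi. split; [lra|]. split.
        * apply Rlt_le_trans with (/ INR n); [lra|]. unfold n. rewrite !S_INR.
          assert (0 <= INR n') by apply pos_INR.
          apply (Rmult_le_reg_r ((INR n' + 1) * (INR n' + 1 + 1))). nra.
          field_simplify; try lra.
        * intros _. rewrite g_formula by (auto; unfold n; lia). f_equal. f_equal.
          change (f_t t (/ INR n)) with (D 0%nat (/ INR n)). rewrite HT.
          rewrite (sum_conv D n M) by (auto; lia).
          change (D 0%nat 0) with (f_t t 0). rewrite Hf0. replace (S M - 1)%nat with M by lia.
          unfold D. rewrite pow_inv. unfold Rdiv. rewrite Rinv_mult. ring. }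
  exists (fun n => proj1_sig (constructive_indefinite_description _ (Hex n))).
  set (mu := fun n => proj1_sig (constructive_indefinite_description _ (Hex n))).
  assert (Hmu : forall n, 0 < mu n /\ mu n < 2 / INR (S n) /\ _) by
    (intros n; exact (proj2_sig (constructive_indefinite_description _ (Hex n)))).
  fold mu.
  assert (Hlim : is_lim_seq mu 0).
  { apply (is_lim_seq_le_le (fun _ => 0) mu (fun n => 2 / INR (S n))).
    - intros n. destruct (Hmu n) as [A [B _]]. lra.
    - apply is_lim_seq_const.
    - apply lim_2_over; exact tt. }
  split; [|split; auto].
  - intros n Hn. destruct (Hmu n) as [A [_ C]]. split; auto.
  - apply (filterlim_comp _ _ _ mu (D (S M)) eventually (at_right 0)).
    + intros P [e HP]. assert (Hl := Hlim (ball 0 e) (locally_ball _ _)).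
      destruct Hl as [N0 HN0]. exists N0. intros n Hn. apply HP. apply HN0; auto. apply (proj1 (Hmu n)).
    + apply (proj1 (TR' (S M) (le_n _))).
Qed.
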